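(* A permutation group $G$ on a finite set $\Omega$ with $|\Omega|\ge 2$ has the ordered $2$-ut property if and only if $G$ is primitive.
   Context: $G$ has the ordered $k$-ut property if for every $k$-tuple $(a_1,\dots,a_k)$ of distinct points of $\Omega$ and every ordered partition $(P_1,\dots,P_k)$ of $\Omega$ into $k$ nonempty parts there is $g\in G$ with $a_ig\in P_i$ for all $i$. *)

(* Defs.v *)
From mathcomp Require Import all_boot all_fingroup all_solvable.
Set Implicit Arguments. Unset Strict Implicit. Unset Printing Implicit Defensive.

(* A permutation group on the finite set Omega = T is a group G of {perm T};
   a point x is sent by g to g x (= aperm x g). *)

Definition ordered_partition (T : finType) (k : nat) (P : 'I_k -> {set T}) :=
  (forall i, P i != set0) /\
  (forall i j, i != j -> [disjoint P i & P j]) /\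
  (forall x : T, exists i, x \in P i).

Definition ordered_ut (T : finType) (k : nat) (G : {group {perm T}}) :=
  forall (a : 'I_k -> T), injective a ->
  forall (P : 'I_k -> {set T}), ordered_partition P ->
  exists2 g, g \in G & forall i, g (a i) \in P i.

(* Main.v *)
Require Import Defs.
From mathcomp Require Import all_boot all_fingroup all_solvable.
Set Implicit Arguments. Unset Strict Implicit. Unset Printing Implicit Defensive.
Local Open Scope group_scope.

Local Open Scope group_scope.

Section H.
Variables (T : finType) (G : {group {perm T}}).

Definition a2 (x y : T) : 'I_2 -> T := fun i => if val i == 0%N then x else y.
Definition P2 (B : {set T}) : 'I_2 -> {set T} := fun i => if val i == 0%N then B else ~: B.

Lemma a2_inj x y : x != y -> injective (a2 x y).
Proof.
move=> nxy [[|[|i]] Hi] [[|[|j]] Hj] //=; rewrite /a2 /= => E; try by apply: val_inj.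
- by rewrite E eqxx in nxy.
- by rewrite E eqxx in nxy.
Qed.

Lemma P2_part B : B != set0 -> ~: B != set0 -> ordered_partition (P2 B).
Proof.
move=> h0 h1; split; last split.
- by move=> [[|[|i]] Hi].
- move=> [[|[|i]] Hi] [[|[|j]] Hj] //= _; rewrite /P2 /=.
  + by rewrite disjoints_subset setCK.
  + by rewrite disjoint_sym disjoints_subset setCK.
- move=> x; case: (boolP (x \in B)) => hx.
  + by exists ord0.
  + by exists (@Ordinal 2 1 isT); rewrite /P2 /= inE hx.
Qed.

Lemma ut2P : ordered_ut 2 G -> forall x y B, x != y -> B != set0 -> ~: B != set0 ->
  exists2 g, g \in G & (g x \in B) /\ (g y \notin B).
Proof.
move=> ut x y B nxy h0 h1.
have [g Gg H] := ut _ (a2_inj nxy) _ (P2_part h0 h1).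
exists g => //; split; first exact: (H ord0).
by have := H (@Ordinal 2 1 isT); rewrite /P2 /a2 /= inE.
Qed.

Lemma ut2_of : (forall x y B, x != y -> B != set0 -> ~: B != set0 ->
  exists2 g, g \in G & (g x \in B) /\ (g y \notin B)) -> ordered_ut 2 G.
Proof.
move=> H a ia P [ne [dj cv]].
set i0 : 'I_2 := ord0; set i1 : 'I_2 := @Ordinal 2 1 isT.
have n01 : i0 != i1 by [].
have eP1 : P i1 = ~: P i0.
  apply/setP=> z; rewrite inE; apply/idP/idP => hz.
  - apply/negP => hz0; have := dj _ _ n01; rewrite disjoint_sym => /disjointFr.
    by move/(_ _ hz) ; rewrite hz0.
  - have [[[|[|k]] Hk] Pk] := cv z => //.
    + have e : Ordinal Hk = i0 by apply: val_inj.
      by rewrite e in Pk; rewrite Pk in hz.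
    + have e : Ordinal Hk = i1 by apply: val_inj.
      by rewrite e in Pk.
have ax : a i0 != a i1 by apply/eqP => /ia.
have ne1 : ~: P i0 != set0 by rewrite -eP1; exact: ne.
have [g Gg [g0 g1]] := H _ _ (P i0) ax (ne i0) (ne1).
exists g => // -[[|[|k]] Hk] //.
- by have -> : Ordinal Hk = i0 by apply: val_inj.
- have -> : Ordinal Hk = i1 by apply: val_inj.
  by rewrite eP1 inE.
Qed.
End H.
Lemma count_eq (T : finType) (G : {group {perm T}}) (x y : T) (A : {set T}) :
  [transitive G, on [set: T] | 'P] ->
  #|[set g in G | g x \in A]| = #|[set g in G | g y \in A]|.
Proof.
move=> trG.
have [h Gh hy] := atransP2 trG (in_setT y) (in_setT x).
have hy' : h y = x by rewrite hy.
have -> : [set g in G | g y \in A] = (mulg h) @: [set g in G | g x \in A].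
  apply/setP => g; rewrite inE; apply/andP/imsetP.
  - case=> Gg gy; exists (h^-1 * g); last by rewrite mulKVg.
    rewrite inE groupM ?groupV //= permM -hy' permK; exact: gy.
  - case=> k; rewrite inE => /andP[Gk kx] ->; split; first by rewrite groupM.
    by rewrite permM hy'.
by rewrite card_imset //; apply: mulgI.
Qed.
Lemma ut_prim (T : finType) (G : {group {perm T}}) : 1 < #|T| ->
  ordered_ut 2 G -> [primitive G, on [set: T] | 'P].
Proof.
move=> cT ut; have U := ut2P ut.
have [x0 [w [_ _ nx0w]]] := card_gt1P cT.
apply/andP; split.
  apply/imsetP; exists x0 => //; apply/setP => y; rewrite inE; symmetry.
  apply/orbitP; case: (eqVneq y x0) => [->|nyx].
    by exists 1 => //; exact: act1.
  have h0 : [set y] != set0 by apply/set0Pn; exists y; rewrite inE.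
  have h1 : ~: [set y] != set0 by apply/set0Pn; exists x0; rewrite !inE eq_sym.
  have [g Gg [gx _]] := U _ _ _ nx0w h0 h1.
  by exists g => //; rewrite /=; apply/eqP; rewrite -in_set1.
apply/negP => /existsP [Q /and3P[/and3P[/eqP cov triv nz0] act /andP[c1 c2]]].
have cx z : z \in cover Q by rewrite cov inE.
case: (boolP [exists x, exists y, (x != y) && (pblock Q x == pblock Q y)]); last first.
  move=> /negP nex; move: c2; rewrite ltnNge => /negP; apply.
  have inj : {in [set: T] &, injective (pblock Q)}.
    move=> u v _ _ e; case: (eqVneq u v) => // nuv; case: nex.
    by apply/existsP; exists u; apply/existsP; exists v; rewrite nuv e eqxx.
  rewrite -(card_in_imset inj); apply: subset_leq_card.
  by apply/subsetP => _ /imsetP[u _ ->]; apply: pblock_mem.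
move=> /existsP[x /existsP[y /andP[nxy /eqP exy]]].
set B := pblock Q x.
have xB : x \in B by rewrite mem_pblock.
have yB : y \in B by rewrite /B exy mem_pblock.
have QB : B \in Q by apply: pblock_mem.
have [C [D [QC QD nCD]]] := card_gt1P c1.
have [E [QE nEB]] : exists E, E \in Q /\ E != B.
  case: (eqVneq C B) => [eCB|]; last by exists C.
  by exists D; split => //; rewrite -eCB eq_sym.
have /set0Pn[z zE] : E != set0 by apply: contraNneq nz0 => <-.
have h0 : B != set0 by apply/set0Pn; exists x.
have h1 : ~: B != set0.
  apply/set0Pn; exists z; rewrite inE; apply/negP => zB.
  by move: nEB; rewrite -(def_pblock triv QE zE) (def_pblock triv QB zB) eqxx.
have [g Gg [gx gy]] := U _ _ _ nxy h0 h1.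
have QB' : ('P^* B g)%act \in Q by rewrite (actsP act g Gg).
have gxB' : g x \in ('P^* B g)%act.
  by rewrite /= setactE; apply/imsetP; exists x.
have eB : ('P^* B g)%act = B.
  by rewrite -(def_pblock triv QB' gxB') (def_pblock triv QB gx).
move: gy; rewrite -eB /= setactE; case/negP.
by apply/imsetP; exists y.
Qed.
Lemma prim_ut (T : finType) (G : {group {perm T}}) :
  [primitive G, on [set: T] | 'P] -> ordered_ut 2 G.
Proof.
case/andP => trG nimp; apply: ut2_of => x y B nxy h0 h1.
set X := [set g in G | g x \in B]; set Y := [set g in G | g y \in B].
have cXY : #|X :\: Y| = #|Y :\: X|.
  have := count_eq x y B trG; rewrite -/X -/Y => cc.
  have a := cardsID Y X; have b := cardsID X Y; rewrite setIC in b.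
  by apply/eqP; rewrite -(eqn_add2l #|X :&: Y|) a b cc.
case: (set_0Vmem (X :\: Y)) => [e0|[g]]; last first.
  rewrite !inE => /andP[/nandP hY /andP[Gg gx]]; exists g => //; split => //.
  by case: hY => //; rewrite Gg.
have e1 : Y :\: X = set0 by apply/eqP; rewrite -cards_eq0 -cXY e0 cards0.
pose E := fun u v : T => [forall g in G, (g u \in B) == (g v \in B)].
have Exy : E x y.
  apply/forall_inP => g Gg; apply/eqP; apply/idP/idP => H.
  - apply/negPn/negP => H'.
    have : g \in X :\: Y by rewrite !inE Gg H H'.
    by rewrite e0 inE.
  - apply/negPn/negP => H'.
    have : g \in Y :\: X by rewrite !inE Gg H H'.
    by rewrite e1 inE.
have Einv g u v : g \in G -> E (g u) (g v) = E u v.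
  move=> Gg; apply/forall_inP/forall_inP => H k Gk.
  - have := H (g^-1 * k) (groupM (groupVr Gg) Gk).
    by rewrite !permM !permK.
  - by rewrite -!permM; apply: H; rewrite groupM.
have Etr u v w : E u v -> E u w = E v w.
  move=> Euv; apply/forall_inP/forall_inP => H k Gk.
  - by rewrite -(eqP (forall_inP Euv k Gk)); apply: H.
  - by rewrite (eqP (forall_inP Euv k Gk)); apply: H.
have Erefl u : E u u by apply/forall_inP => k _.
have eqiE : {in [set: T] & &, equivalence_rel E}.
  by move=> u v w _ _ _; split; [apply: Erefl | apply: Etr].
set Q := equivalence_partition E [set: T].
pose cl u := [set v in [set: T] | E u v].
have class_act g u : g \in G -> ('P^* (cl u) g)%act = cl (g u).
  move=> Gg; apply/setP => v; rewrite /= setactE inE /=; apply/imsetP/idP.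
  - case=> z; rewrite inE in_setT /= => Euz ->.
    by rewrite apermE in_setT Einv.
  - rewrite in_setT /= => Eguv; exists (g^-1 v); last by rewrite apermE permKV.
    by rewrite inE in_setT /= -(Einv g) // permKV.
case/negP: nimp; apply/existsP; exists Q; apply/and3P; split.
- exact: equivalence_partitionP.
- apply/actsP => g Gg Z; apply/idP/idP.
  + move=> /imsetP[u _ e].
    rewrite -[Z](actK ('P^*)%act g) e.
    rewrite (class_act g^-1 u (groupVr Gg)); apply: imset_f; exact: in_setT.
  + move=> /imsetP[u _ ->]; rewrite class_act //; apply: imset_f; exact: in_setT.
- have clE u v : (v \in cl u) = E u v by rewrite inE in_setT.
  apply/andP; split.
  + have [u uB] := set0Pn _ h0; have [v] := set0Pn _ h1; rewrite inE => vB.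
    apply/card_gt1P; exists (cl u), (cl v); split; try by apply: imset_f; exact: in_setT.
    apply/negP => /eqP e; have : v \in cl u by rewrite e clE.
    rewrite clE => /forall_inP /(_ 1 (group1 _)) /eqP; rewrite !perm1 uB.
    by move=> e'; rewrite -e' in vB.
  + rewrite ltn_neqAle leq_imset_card andbT; apply/negP => /imset_injP inj.
    case/negP: nxy; apply/eqP; apply: inj; rewrite ?in_setT //.
    by apply/setP => v; rewrite !inE /= (Etr _ _ _ Exy).
Qed.

Unset Implicit Arguments.
Theorem proposition2p2 (T : finType) (G : {group {perm T}}) :
  1 < #|T| ->
  (ordered_ut 2 G <-> [primitive G, on [set: T] | 'P]).
Proof.
move=> cT; split; [exact: ut_prim | exact: prim_ut].
Qed.
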